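(* There exist an absolute constant $c>0$ and an integer $N$ such that for every integer $n\geq N$ the following holds. Let $f:\mathbb{R}\to\mathbb{R}$ be the continuous function which equals $1$ on $[\frac{1}{n},1-\frac{1}{n}]$, equals $-1$ on $[-1+\frac{1}{n},-\frac{1}{n}]$, equals $0$ for $|t|\geq 1$, and is linear on each of the intervals $[-1,-1+\frac{1}{n}]$, $[-\frac{1}{n},\frac{1}{n}]$ and $[1-\frac{1}{n},1]$. Let $\phi_n(x)=c_n\left(1-\frac{x^2}{4}\right)^{n^2}$, with $c_n>0$ chosen so that $\int_{-2}^2\phi_n(x)\,dx=1$, and let $P_n(t)=\int_{-1}^1 f(x)\phi_n(t-x)\,dx$. Then $P_n$ is a polynomial of degree $d=2n^2-1$ and $$\bigg|\,\mathrm{p.v.}\int_{\mathbb{R}} e^{iP_n(t)}\frac{dt}{t}\bigg|\geq c\log d.$$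
   Context: The principal value integral is $\mathrm{p.v.}\int_{\mathbb{R}} e^{iP(t)}\frac{dt}{t}=\lim_{\epsilon\to 0^+,\,R\to\infty}\int_{\epsilon\leq |t|\leq R} e^{iP(t)}\frac{dt}{t}$. *)

(* Defs.v *)
From Stdlib Require Import Reals.
From Coquelicot Require Import Coquelicot.
Open Scope R_scope.

(* f is affine (linear in the paper's sense) on [a,b]. *)
Definition affine_on (f : R -> R) (a b : R) : Prop :=
  exists alpha beta : R, forall t, a <= t <= b -> f t = alpha * t + beta.

Definition trunc_int (g : R -> R) (eps Rr : R) : R :=
  RInt g (- Rr) (- eps) + RInt g eps Rr.

Definition pv_integral (g : R -> R) (L : R) : Prop :=
  filterlim (fun p : R * R => trunc_int g (fst p) (snd p))
    (filter_prod (at_right 0) (Rbar_locally p_infty)) (locally L).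

Definition is_poly_of_degree (P : R -> R) (d : nat) : Prop :=
  exists a : nat -> R, a d <> 0 /\
    forall t, P t = sum_f_R0 (fun k => a k * t ^ k) d.

(* Main.v *)
Require Import Defs.
From Stdlib Require Import Reals Lra Lia Psatz.
From Coquelicot Require Import Coquelicot.
Open Scope R_scope.

Lemma is_derive_eqv (f : R -> R) x l l' : is_derive f x l -> l = l' -> is_derive f x l'.
Proof. intros H <-; exact H. Qed.

Definition spoly (c : nat -> R) (e : nat -> nat) (D : nat) (t : R) : R :=
  sum_f_R0 (fun k => c k * t ^ (e k)) D.

Lemma spoly_derive c e D t :
  is_derive (spoly c e D) t (spoly (fun k => c k * INR (e k)) (fun k => pred (e k)) D t).
Proof.
  induction D; unfold spoly in *; simpl.
  - eapply is_derive_eqv. apply is_derive_scal. apply is_derive_pow. apply is_derive_id.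
    unfold one; simpl; ring.
  - eapply is_derive_eqv. apply (is_derive_plus (fun t => sum_f_R0 (fun k : nat => c k * t ^ e k) D)).
    apply IHD. apply is_derive_scal. apply is_derive_pow. apply is_derive_id.
    unfold one, plus; simpl; ring.
Qed.

Lemma spoly_cont c e D t : continuous (spoly c e D) t.
Proof. apply (@ex_derive_continuous R_AbsRing R_NormedModule). eexists. apply spoly_derive. Qed.

Lemma ex_RInt_sum (g : nat -> R -> R) a b N :
  (forall k, ex_RInt (g k) a b) -> ex_RInt (fun x => sum_f_R0 (fun k => g k x) N) a b.
Proof.
  intros H; induction N; simpl.
  - apply H.
  - apply (ex_RInt_plus (fun x => sum_f_R0 (fun k => g k x) N) (g (S N))); auto.
Qed.

Lemma RInt_sum (g : nat -> R -> R) a b N :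
  (forall k, ex_RInt (g k) a b) ->
  RInt (fun x => sum_f_R0 (fun k => g k x) N) a b = sum_f_R0 (fun k => RInt (g k) a b) N.
Proof.
  intros H; induction N; simpl.
  - reflexivity.
  - rewrite <- IHN.
    apply (RInt_plus (fun x => sum_f_R0 (fun k => g k x) N) (g (S N))).
    apply ex_RInt_sum; auto. auto.
Qed.

Lemma sum_swap (g : nat -> nat -> R) M N :
  sum_f_R0 (fun j => sum_f_R0 (fun i => g j i) N) M =
  sum_f_R0 (fun i => sum_f_R0 (fun j => g j i) M) N.
Proof.
  induction M; simpl.
  - reflexivity.
  - rewrite IHM. rewrite <- plus_sum. reflexivity.
Qed.

Lemma sum_pad (h : nat -> R) K N : (K <= N)%nat -> (forall i, (K < i)%nat -> h i = 0) ->
  sum_f_R0 h N = sum_f_R0 h K.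
Proof.
  intros HKN Hz; induction N.
  - assert (K = 0)%nat by lia; subst; reflexivity.
  - destruct (Nat.eq_dec K (S N)). subst; reflexivity.
    simpl. rewrite IHN by lia. rewrite Hz by lia. ring.
Qed.

Lemma cont_pt (f : R -> R) x : continuity_pt f x -> continuous f x.
Proof. intro H; apply continuity_pt_filterlim; exact H. Qed.

Lemma exRI (h : R -> R) a b : (forall x, continuity_pt h x) -> ex_RInt h a b.
Proof. intros H; apply (@ex_RInt_continuous R_CompleteNormedModule); intros; apply cont_pt, H. Qed.

Lemma aux_m1 (X : R) : - (-1 * X) = X. Proof. ring. Qed.
Lemma RInt_sym (h : R -> R) : (forall x, continuity_pt h x) ->
  RInt h (-1) 1 = RInt (fun x => h x + h (-x)) 0 1.
Proof.
  intros Hc.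
  assert (Hc' : forall x, continuity_pt (fun y => h (-y)) x).
  { intros x. apply (continuity_pt_comp (fun y => -y) h). apply continuity_pt_opp, continuity_pt_id. apply Hc. }
  rewrite <- (RInt_Chasles h (-1) 0 1) by (apply exRI; auto).
  rewrite (RInt_plus h (fun y => h (-y))) by (apply exRI; auto).
  unfold plus; simpl. rewrite Rplus_comm. f_equal.
  assert (E := RInt_comp_lin h (-1) 0 0 1).
  replace (-1 * 0 + 0) with 0 in E by ring. replace (-1 * 1 + 0) with (-1) in E by ring.
  rewrite <- (opp_RInt_swap h) by (apply exRI; auto).
  rewrite <- E by (apply exRI; auto).
  rewrite RInt_scal. unfold scal, opp; simpl. unfold mult; simpl.
  rewrite aux_m1.
  apply RInt_ext. intros; f_equal; ring.
  apply ex_RInt_ext with (fun y => h (-y)). intros; f_equal; ring. apply exRI; auto.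
Qed.

Lemma f_facts (f : R -> R) (a : R) : 0 < a -> a <= 1/4 ->
  (forall t, a <= t <= 1 - a -> f t = 1) ->
  (forall t, -1 + a <= t <= - a -> f t = -1) ->
  (forall t, 1 <= Rabs t -> f t = 0) ->
  affine_on f (-1) (-1 + a) -> affine_on f (- a) a -> affine_on f (1 - a) 1 ->
  (forall t, f (-t) = - f t) /\ (forall t, 0 <= t -> 0 <= f t <= 1).
Proof.
  intros Ha Ha4 H1 Hm1 H0 [al [be A1]] [ga [de A2]] [al' [be' A3]].
  assert (F0 : forall t, 1 <= t -> f t = 0) by (intros; apply H0; rewrite Rabs_right; lra).
  assert (F0' : forall t, t <= -1 -> f t = 0) by (intros; apply H0; rewrite Rabs_left1; lra).
  assert (e1 : al * (-1) + be = 0) by (rewrite <- A1 by lra; apply F0'; lra).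
  assert (e2 : al * (-1 + a) + be = -1) by (rewrite <- A1 by lra; apply Hm1; lra).
  assert (e3 : ga * (- a) + de = -1) by (rewrite <- A2 by lra; apply Hm1; lra).
  assert (e4 : ga * a + de = 1) by (rewrite <- A2 by lra; apply H1; lra).
  assert (e5 : al' * (1 - a) + be' = 1) by (rewrite <- A3 by lra; apply H1; lra).
  assert (e6 : al' * 1 + be' = 0) by (rewrite <- A3 by lra; apply F0; lra).
  assert (Eb : be = al) by lra.
  assert (Eb' : be' = - al') by lra.
  assert (Ed : de = 0) by lra.
  assert (Ea : al * a = -1) by nra.
  assert (Ea' : al' * a = -1) by nra.
  assert (Eg : ga * a = 1) by nra.
  assert (Eaa : al' = al) by (apply (Rmult_eq_reg_r a); lra).
  assert (Eg2 : ga = - al) by (apply (Rmult_eq_reg_r a); lra).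
  subst be be' de. subst al'. subst ga.
  assert (Hal : al < 0) by nra.
  split.
  - intros t.
    destruct (Rle_lt_dec t (-1)) as [c1|c1].
    { rewrite (F0' t), (F0 (-t)) by lra. ring. }
    destruct (Rle_lt_dec t (-1 + a)) as [c2|c2].
    { rewrite (A1 t), (A3 (-t)) by lra. ring. }
    destruct (Rle_lt_dec t (- a)) as [c3|c3].
    { rewrite (Hm1 t), (H1 (-t)) by lra. ring. }
    destruct (Rle_lt_dec t a) as [c4|c4].
    { rewrite (A2 t), (A2 (-t)) by lra. ring. }
    destruct (Rle_lt_dec t (1 - a)) as [c5|c5].
    { rewrite (Hm1 (-t)), (H1 t) by lra. ring. }
    destruct (Rle_lt_dec t 1) as [c6|c6].
    { rewrite (A1 (-t)), (A3 t) by lra. ring. }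
    rewrite (F0' (-t)), (F0 t) by lra. ring.
  - intros t Ht.
    destruct (Rle_lt_dec t a) as [c4|c4].
    { rewrite A2 by lra. split; nra. }
    destruct (Rle_lt_dec t (1 - a)) as [c5|c5].
    { rewrite H1 by lra. lra. }
    destruct (Rle_lt_dec t 1) as [c6|c6].
    { rewrite A3 by lra. split; nra. }
    rewrite F0 by lra. lra.
Qed.

Lemma RInt_scalR (g : R -> R) l a b : ex_RInt g a b -> RInt (fun x => l * g x) a b = l * RInt g a b.
Proof. intros H. exact (RInt_scal g a b l H). Qed.

Lemma psi_expand (m : nat) (y : R) : (1 - y^2/4)^m =
  sum_f_R0 (fun j => Binomial.C m j * (-1/4)^j * y^(2*j)) m.
Proof.
  replace (1 - y^2/4) with ((-1/4) * y^2 + 1) by field.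
  rewrite binomial. apply sum_eq. intros i Hi.
  rewrite pow1, Rpow_mult_distr, pow_mult. ring.
Qed.

Lemma pow_expand (t x : R) (N : nat) : (t - x)^N =
  sum_f_R0 (fun k => Binomial.C N k * (-x)^(N-k) * t^k) N.
Proof.
  replace (t - x) with (t + - x) by ring. rewrite binomial. apply sum_eq. intros; ring.
Qed.

Definition mu (f : R -> R) (r : nat) : R := RInt (fun x => f x * (-x)^r) (-1) 1.

Definition Ecoef (f : R -> R) (cn : R) (m j k : nat) : R :=
  if (k <=? 2*j)%nat then cn * (Binomial.C m j * (-1/4)^j) * Binomial.C (2*j) k * mu f (2*j - k) else 0.

Definition acoef (f : R -> R) (cn : R) (m k : nat) : R :=
  sum_f_R0 (fun j => Ecoef f cn m j k) m.

Lemma P_expand (f : R -> R) (cn : R) (m : nat) (t : R) :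
  (forall x, continuity_pt f x) ->
  RInt (fun x => f x * (cn * (1 - (t - x)^2/4)^m)) (-1) 1 =
  sum_f_R0 (fun k => acoef f cn m k * t^k) (2*m).
Proof.
  intros Hf.
  assert (Hc : forall r x, continuity_pt (fun x => f x * (-x)^r) x).
  { intros; apply continuity_pt_mult; auto; reg. }
  rewrite (RInt_ext _ (fun x => sum_f_R0 (fun j => (cn * (Binomial.C m j * (-1/4)^j)) * (f x * (t-x)^(2*j))) m)).
  2:{ intros x _. rewrite psi_expand. rewrite scal_sum, scal_sum.
      apply sum_eq; intros. ring. }
  rewrite RInt_sum.
  2:{ intros k. apply exRI. intros; apply continuity_pt_mult. reg. apply continuity_pt_mult; auto; reg. }
  rewrite (sum_eq _ (fun j => sum_f_R0 (fun k => Ecoef f cn m j k * t^k) (2*m))).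
  2:{ intros j Hj.
      rewrite RInt_scalR by (apply exRI; intros; apply continuity_pt_mult; auto; reg).
      rewrite (RInt_ext _ (fun x => sum_f_R0 (fun k => (Binomial.C (2*j) k * t^k) * (f x * (-x)^(2*j-k))) (2*j))).
      2:{ intros x _. rewrite pow_expand, scal_sum. apply sum_eq; intros; ring. }
      rewrite RInt_sum by (intros; apply exRI; intros; apply continuity_pt_mult; [reg|auto]).
      rewrite (sum_pad (fun k => Ecoef f cn m j k * t^k) (2*j) (2*m)).
      2: lia.
      2:{ intros i Hi. unfold Ecoef. destruct (Nat.leb_spec i (2*j)); [lia|ring]. }
      rewrite scal_sum. apply sum_eq. intros k Hk.
      rewrite RInt_scalR by (apply exRI; auto).
      unfold Ecoef. destruct (Nat.leb_spec k (2*j)); [|lia]. unfold mu. ring. }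
  rewrite sum_swap. apply sum_eq. intros k _. unfold acoef. rewrite Rmult_comm, scal_sum. reflexivity.
Qed.

Lemma C_neq0 n k : Binomial.C n k <> 0.
Proof.
  unfold Binomial.C, Rdiv. apply Rmult_integral_contrapositive_currified.
  apply INR_fact_neq_0. apply Rinv_neq_0_compat, Rmult_integral_contrapositive_currified; apply INR_fact_neq_0.
Qed.

Lemma P_degree (f : R -> R) (cn : R) (m : nat) :
  (forall x, continuity_pt f x) -> (1 <= m)%nat -> 0 < cn ->
  mu f 0 = 0 -> mu f 1 <> 0 ->
  is_poly_of_degree (fun t => RInt (fun x => f x * (cn * (1 - (t - x)^2/4)^m)) (-1) 1) (2*m - 1).
Proof.
  intros Hf Hm Hcn H0 H1.
  destruct m as [|m']; [lia|].
  assert (Htop : acoef f cn (S m') (2 * S m') = 0).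
  { unfold acoef. rewrite (tech5 _ m').
    rewrite sum_eq_R0. 2:{ intros j Hj. unfold Ecoef. destruct (Nat.leb_spec (2 * S m') (2*j)); [lia|reflexivity]. }
    unfold Ecoef. destruct (Nat.leb_spec (2 * S m') (2 * S m')); [|lia].
    rewrite Nat.sub_diag, H0. ring. }
  exists (acoef f cn (S m')). split.
  - unfold acoef. rewrite (tech5 _ m').
    rewrite sum_eq_R0. 2:{ intros j Hj. unfold Ecoef. destruct (Nat.leb_spec (2 * S m' - 1) (2*j)); [lia|reflexivity]. }
    unfold Ecoef. destruct (Nat.leb_spec (2 * S m' - 1) (2 * S m')); [|lia].
    replace (2 * S m' - (2 * S m' - 1))%nat with 1%nat by lia.
    rewrite Rplus_0_l.
    repeat (first [apply C_neq0 | apply pow_nonzero; lra | exact H1 | lra | apply Rmult_integral_contrapositive_currified]).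
  - intros t. rewrite P_expand by auto.
    replace (2 * S m')%nat with (S (2 * S m' - 1)) by lia.
    rewrite tech5. replace (S (2 * S m' - 1)) with (2 * S m')%nat by lia.
    rewrite Htop. ring.
Qed.

Definition contR (g : R -> R) := forall x, continuity_pt g x.

Lemma RInt_split3 (g : R -> R) p r s q : contR g ->
  RInt g p q = RInt g p r + RInt g r s + RInt g s q.
Proof.
  intros Hg.
  rewrite <- (RInt_Chasles g p s q) by (apply exRI; auto).
  rewrite <- (RInt_Chasles g p r s) by (apply exRI; auto). reflexivity.
Qed.

Lemma RInt_ge0 (g : R -> R) p q : contR g -> p <= q -> (forall x, p <= x <= q -> 0 <= g x) -> 0 <= RInt g p q.
Proof. intros Hg Hpq H. apply RInt_ge_0; auto. apply exRI; auto. intros; apply H; lra. Qed.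

Lemma RInt_mono (g h : R -> R) p q : contR g -> contR h -> p <= q -> (forall x, p <= x <= q -> g x <= h x) ->
  RInt g p q <= RInt h p q.
Proof. intros Hg Hh Hpq H. apply RInt_le; auto; try (apply exRI; auto). intros; apply H; lra. Qed.

Lemma RInt_sub_ge (g : R -> R) p r s q : contR g -> p <= r -> r <= s -> s <= q ->
  (forall x, p <= x <= q -> 0 <= g x) -> RInt g r s <= RInt g p q.
Proof.
  intros Hg H1 H2 H3 H. rewrite (RInt_split3 g p r s q Hg).
  assert (0 <= RInt g p r) by (apply RInt_ge0; auto; intros; apply H; lra).
  assert (0 <= RInt g s q) by (apply RInt_ge0; auto; intros; apply H; lra). lra.
Qed.

Lemma RInt_cst (c p q : R) : RInt (fun _ => c) p q = c * (q - p).
Proof. rewrite RInt_const. unfold scal; simpl; unfold mult; simpl. ring. Qed.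

Lemma RInt_lb (g : R -> R) c p q : contR g -> p <= q -> (forall x, p <= x <= q -> c <= g x) ->
  c * (q - p) <= RInt g p q.
Proof.
  intros Hg Hpq H. rewrite <- RInt_cst. apply RInt_mono; auto. intros x; apply continuity_pt_const; intros ? ?; reflexivity.
Qed.

Lemma RInt_ub (g : R -> R) c p q : contR g -> p <= q -> (forall x, p <= x <= q -> g x <= c) ->
  RInt g p q <= c * (q - p).
Proof.
  intros Hg Hpq H. rewrite <- RInt_cst. apply RInt_mono; auto. intros x; apply continuity_pt_const; intros ? ?; reflexivity.
Qed.

Lemma RInt_minusR (g h : R -> R) p q : contR g -> contR h ->
  RInt (fun x => g x - h x) p q = RInt g p q - RInt h p q.
Proof. intros Hg Hh. apply (RInt_minus g h); apply exRI; auto. Qed.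

Lemma RInt_plusR (g h : R -> R) p q : contR g -> contR h ->
  RInt (fun x => g x + h x) p q = RInt g p q + RInt h p q.
Proof. intros Hg Hh. apply (RInt_plus g h); apply exRI; auto. Qed.

Lemma RInt_oppR (g : R -> R) p q : contR g -> RInt (fun x => - g x) p q = - RInt g p q.
Proof. intros Hg. apply (RInt_opp g); apply exRI; auto. Qed.

Lemma RInt_swapR (g : R -> R) p q : contR g -> RInt g q p = - RInt g p q.
Proof. intros Hg. symmetry. apply (opp_RInt_swap g); apply exRI; auto. Qed.

Lemma contR_comp_lin (g : R -> R) u v : contR g -> contR (fun x => g (u * x + v)).
Proof. intros Hg x. apply (continuity_pt_comp (fun x => u * x + v) g); auto. reg. Qed.

Lemma shift_neg (g : R -> R) t p q : contR g -> RInt (fun x => g (t - x)) p q = RInt g (t - q) (t - p).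
Proof.
  intros Hg. assert (E := RInt_comp_lin g (-1) t p q).
  rewrite (RInt_swapR g (t - p) (t - q)) by auto.
  replace (t - p) with (-1 * p + t) by ring. replace (t - q) with (-1 * q + t) by ring.
  assert (E2 : RInt (fun y => - g (-1 * y + t)) p q = RInt g (-1 * p + t) (-1 * q + t)).
  { rewrite <- E by (apply exRI; auto). apply RInt_ext; intros; unfold scal; simpl; unfold mult; simpl; ring. }
  rewrite <- E2.
  rewrite RInt_oppR by (apply contR_comp_lin; auto). rewrite Ropp_involutive.
  apply RInt_ext; intros; f_equal; ring.
Qed.

Lemma shift_pos (g : R -> R) t p q : contR g -> RInt (fun x => g (t + x)) p q = RInt g (t + p) (t + q).
Proof.
  intros Hg. assert (E := RInt_comp_lin g 1 t p q).
  replace (t + p) with (1 * p + t) by ring. replace (t + q) with (1 * q + t) by ring.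
  rewrite <- E by (apply exRI; auto).
  apply RInt_ext; intros; unfold scal; simpl; unfold mult; simpl. rewrite Rmult_1_l. f_equal; ring.
Qed.

Lemma contR_mult (g h : R -> R) : contR g -> contR h -> contR (fun x => g x * h x).
Proof. intros; intro; apply continuity_pt_mult; auto. Qed.
Lemma contR_plus (g h : R -> R) : contR g -> contR h -> contR (fun x => g x + h x).
Proof. intros; intro; apply continuity_pt_plus; auto. Qed.
Lemma contR_minus (g h : R -> R) : contR g -> contR h -> contR (fun x => g x - h x).
Proof. intros; intro; apply continuity_pt_minus; auto. Qed.

Lemma Rep (f K : R -> R) t : contR f -> contR K -> (forall x, f (-x) = - f x) ->
  RInt (fun x => f x * K (t - x)) (-1) 1 = RInt (fun x => f x * (K (t - x) - K (t + x))) 0 1.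
Proof.
  intros Hf HK Hodd. rewrite RInt_sym.
  - apply RInt_ext. intros x _. rewrite Hodd. replace (t - - x) with (t + x) by ring. match goal with |- ?a = ?b => change (@eq R a b) end; ring.
  - apply contR_mult; auto. intro x. apply (continuity_pt_comp (fun x => t - x) K); [reg | apply HK].
Qed.

Definition psiF (m : nat) (y : R) := (1 - y^2/4)^m.
Definition phiF (cn : R) (m : nat) (y : R) := cn * (1 - y^2/4)^m.

Lemma psiF_cont m : contR (psiF m). Proof. intro; unfold psiF; reg. Qed.
Lemma phiF_cont cn m : contR (phiF cn m). Proof. intro; unfold phiF; reg. Qed.
Lemma phiF_even cn m y : phiF cn m (-y) = phiF cn m y.
Proof. unfold phiF. replace ((-y)^2) with (y^2) by ring. reflexivity. Qed.
Lemma psiF_nonneg m y : y^2 <= 4 -> 0 <= psiF m y.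
Proof. intros; unfold psiF; apply pow_le; lra. Qed.
Lemma psiF_mono m y1 y2 : y1^2 <= y2^2 -> y2^2 <= 4 -> psiF m y2 <= psiF m y1.
Proof. intros; unfold psiF; apply pow_incr; lra. Qed.
Lemma phiF_nonneg cn m y : 0 <= cn -> y^2 <= 4 -> 0 <= phiF cn m y.
Proof. intros; unfold phiF; apply Rmult_le_pos; auto. apply pow_le; lra. Qed.
Lemma phiF_mono cn m y1 y2 : 0 <= cn -> y1^2 <= y2^2 -> y2^2 <= 4 -> phiF cn m y2 <= phiF cn m y1.
Proof. intros; unfold phiF; apply Rmult_le_compat_l; auto. apply pow_incr; lra. Qed.

Lemma bernoulli_m u m : 0 <= u <= 1 -> 1 - INR m * u <= (1 - u)^m.
Proof.
  intros Hu; induction m.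
  - simpl; lra.
  - rewrite S_INR. simpl.
    destruct (Rle_lt_dec 0 (1 - INR m * u)).
    + pose proof (pos_INR m). assert (0 <= INR m * u * u) by (apply Rmult_le_pos; [apply Rmult_le_pos|]; lra).
      assert ((1 - u) * (1 - INR m * u) <= (1 - u) * (1 - u)^m) by (apply Rmult_le_compat_l; lra). nra.
    + pose proof (pos_INR m). assert (0 <= (1 - u)^m) by (apply pow_le; lra). nra.
Qed.

Lemma exp_le x y : x <= y -> exp x <= exp y.
Proof. intros [H|H]; [left; apply exp_increasing; auto | subst; lra]. Qed.

Lemma exp_pow_R x m : exp x ^ m = exp (x * INR m).
Proof.
  induction m. simpl. rewrite Rmult_0_r, exp_0. reflexivity.
  simpl pow. rewrite IHm, <- exp_plus, S_INR. f_equal; ring.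
Qed.

Lemma pow_exp_bound u m : 0 <= u <= 1 -> (1 - u)^m <= exp (- u * INR m).
Proof.
  intros Hu. rewrite <- exp_pow_R. apply pow_incr. split; [lra|]. 
  pose proof (exp_ineq1_le (-u)). lra.
Qed.

Lemma exp4 : exp (-4) <= 1/16.
Proof.
  replace (-4) with (- (4)) by ring. rewrite exp_Ropp. pose proof (exp_ineq1_le 1).
  replace 4 with (1+1+1+1) by ring. rewrite !exp_plus.
  set (e := exp 1) in *.
  assert (4 <= e * e) by nra.
  assert (16 <= e * e * e * e) by (replace (e*e*e*e) with ((e*e)*(e*e)) by ring; nra).
  apply Rmult_le_reg_l with (e * e * e * e). lra.
  rewrite Rinv_r by lra. lra.
Qed.

Lemma RInt_exp_lin a p q : 0 < a ->
  RInt (fun y => exp (- y / a)) p q = a * exp (- p / a) - a * exp (- q / a).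
Proof.
  intros Ha. apply is_RInt_unique.
  assert (H := is_RInt_derive (fun y => - a * exp (- y / a)) (fun y => exp (- y / a)) p q).
  replace (a * exp (- p / a) - a * exp (- q / a)) with (minus (- a * exp (- q / a)) (- a * exp (- p / a))).
  2:{ unfold minus, plus, opp; simpl; ring. }
  apply H.
  - intros x _. auto_derive. auto. unfold Rdiv. field. lra.
  - intros x _. apply cont_pt. reg.
Qed.

Section Kernel.
Variables (cn a : R) (n : nat).
Hypothesis Hn : (10 <= n)%nat.
Hypothesis Hcn : 0 < cn.
Hypothesis Hnorm : RInt (phiF cn (n^2)) (-2) 2 = 1.

Hypothesis Ha : a = 1 / INR n.
Lemma a_pos : 0 < a.
Proof. rewrite Ha. apply Rdiv_lt_0_compat. lra. apply lt_0_INR; lia. Qed.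
Lemma a_small : a <= 1/10.
Proof.
  rewrite Ha. apply le_INR in Hn. simpl in Hn. unfold Rdiv. rewrite !Rmult_1_l. apply Rinv_le_contravar; lra.
Qed.
Lemma INR_m : INR (n^2) * a^2 = 1.
Proof. rewrite Ha. rewrite pow_INR. field. apply not_0_INR; lia. Qed.

Lemma I_lower : 3/2 * a <= RInt (psiF (n^2)) (-2) 2.
Proof.
  pose proof a_pos; pose proof a_small; pose proof INR_m.
  apply Rle_trans with (RInt (psiF (n^2)) (-a) a).
  - replace (3/2 * a) with (3/4 * (a - - a)) by lra. apply RInt_lb. apply psiF_cont. lra.
    intros x Hx. unfold psiF. replace (1 - x^2/4) with (1 - x^2/4) by ring.
    eapply Rle_trans. 2: apply bernoulli_m; nra.
    assert (x^2 <= a^2) by nra. pose proof (pos_INR (n^2)).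
    assert (INR (n^2) * x^2 <= INR (n^2) * a^2) by (apply Rmult_le_compat_l; lra). lra.
  - apply RInt_sub_ge; try lra. apply psiF_cont. intros; apply psiF_nonneg; nra.
Qed.

Lemma T_upper : RInt (psiF (n^2)) (4*a) 2 <= a * exp (-4).
Proof.
  pose proof a_pos; pose proof a_small; pose proof INR_m.
  apply Rle_trans with (RInt (fun y => exp (- y / a)) (4*a) 2).
  - apply RInt_mono. apply psiF_cont. intro; reg. lra.
    intros x Hx. unfold psiF. eapply Rle_trans. apply pow_exp_bound. nra.
    apply exp_le. 
    assert (x / a <= x^2/4 * INR (n^2)).
    { apply Rmult_le_reg_r with (a^2). nra. rewrite Rmult_assoc, INR_m. 
      replace (x / a * a^2) with (x * a) by (field; lra). nra. }
    unfold Rdiv in *. lra.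
  - rewrite RInt_exp_lin by auto. replace (- (4*a) / a) with (-4) by (field; lra).
    match goal with |- _ - a * exp ?z <= _ => assert (0 < a * exp z) by (apply Rmult_lt_0_compat; [lra|apply exp_pos]) end. lra.
Qed.

Lemma cn_a : cn * a <= 2/3.
Proof.
  pose proof I_lower. pose proof a_pos.
  assert (E : cn * RInt (psiF (n^2)) (-2) 2 = 1).
  { rewrite <- Hnorm. symmetry. apply (RInt_scalR (psiF (n^2))). apply exRI, psiF_cont. }
  nra.
Qed.

Lemma tail_small : RInt (phiF cn (n^2)) (4*a) 2 <= 1/24.
Proof.
  pose proof T_upper; pose proof cn_a; pose proof exp4; pose proof a_pos.
  assert (E : RInt (phiF cn (n^2)) (4*a) 2 = cn * RInt (psiF (n^2)) (4*a) 2).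
  { apply (RInt_scalR (psiF (n^2))). apply exRI, psiF_cont. }
  rewrite E. assert (0 < exp (-4)) by apply exp_pos.
  apply Rle_trans with (cn * (a * exp (-4))). apply Rmult_le_compat_l; lra. nra.
Qed.

Lemma center_big : 1 - 2/24 <= RInt (phiF cn (n^2)) (-(4*a)) (4*a).
Proof.
  pose proof tail_small; pose proof a_pos; pose proof a_small.
  rewrite (RInt_split3 _ (-2) (-(4*a)) (4*a) 2) in Hnorm by apply phiF_cont.
  assert (RInt (phiF cn (n^2)) (-2) (-(4*a)) = RInt (phiF cn (n^2)) (4*a) 2).
  { rewrite <- (Rminus_0_l 2), <- (Rminus_0_l (4*a)) at 1. rewrite <- shift_neg by apply phiF_cont.
    apply RInt_ext; intros; rewrite Rminus_0_l; apply phiF_even. }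
  lra.
Qed.

End Kernel.

Ltac reqR := match goal with |- ?a = ?b => change (@eq R a b) end.

Definition PF (f : R -> R) (cn : R) (m : nat) (t : R) :=
  RInt (fun x => f x * phiF cn m (t - x)) (-1) 1.

Section PFsec.
Variables (f : R -> R) (cn a : R) (n : nat).
Hypothesis Hn : (10 <= n)%nat.
Hypothesis Hcn : 0 < cn.
Hypothesis Hnorm : RInt (phiF cn (n^2)) (-2) 2 = 1.
Hypothesis Ha : a = 1 / INR n.
Hypothesis Hfc : contR f.
Hypothesis Hodd : forall t, f (-t) = - f t.
Hypothesis Hf01 : forall t, 0 <= t -> 0 <= f t <= 1.
Hypothesis Hf1 : forall t, a <= t <= 1 - a -> f t = 1.

Lemma PF_rep t : PF f cn (n^2) t = RInt (fun x => f x * (phiF cn (n^2) (t - x) - phiF cn (n^2) (t + x))) 0 1.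
Proof. unfold PF. apply Rep; auto. apply phiF_cont. Qed.

Lemma PF_odd t : PF f cn (n^2) (-t) = - PF f cn (n^2) t.
Proof.
  rewrite !PF_rep. rewrite <- RInt_oppR.
  - apply RInt_ext. intros x _. rewrite <- (phiF_even cn (n^2) (-t - x)), <- (phiF_even cn (n^2) (-t + x)).
    replace (- (-t - x)) with (t + x) by ring. replace (- (-t + x)) with (t - x) by ring. reqR. ring.
  - apply contR_mult; auto. apply contR_minus.
    + intro x; apply (continuity_pt_comp (fun x => t - x)); [reg|apply phiF_cont].
    + intro x; apply (continuity_pt_comp (fun x => t + x)); [reg|apply phiF_cont].
Qed.

Lemma kcont t : contR (fun x => f x * (phiF cn (n^2) (t - x) - phiF cn (n^2) (t + x))).
Proof.
  apply contR_mult; auto. apply contR_minus.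
  + intro x; apply (continuity_pt_comp (fun x => t - x)); [reg|apply phiF_cont].
  + intro x; apply (continuity_pt_comp (fun x => t + x)); [reg|apply phiF_cont].
Qed.

Lemma k_facts t x : 0 <= t <= 1 -> 0 <= x <= 1 ->
  0 <= phiF cn (n^2) (t + x) <= phiF cn (n^2) (t - x).
Proof.
  intros Ht Hx. split.
  - apply phiF_nonneg; nra.
  - apply phiF_mono; nra.
Qed.

Lemma PF_01 t : 0 <= t <= 1 -> 0 <= PF f cn (n^2) t <= 1.
Proof.
  intros Ht. rewrite PF_rep. split.
  - apply RInt_ge0. apply kcont. lra. intros x Hx.
    destruct (k_facts t x Ht Hx). destruct (Hf01 x). lra. apply Rmult_le_pos; lra.
  - apply Rle_trans with (RInt (fun x => phiF cn (n^2) (t - x)) 0 1).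
    + apply RInt_mono. apply kcont. intro x; apply (continuity_pt_comp (fun x => t - x)); [reg|apply phiF_cont].
      lra. intros x Hx. destruct (k_facts t x Ht Hx). destruct (Hf01 x). lra.
      assert (f x * (phiF cn (n ^ 2) (t - x) - phiF cn (n ^ 2) (t + x)) <= 1 * (phiF cn (n ^ 2) (t - x) - phiF cn (n ^ 2) (t + x))) by (apply Rmult_le_compat_r; lra).
      lra.
    + rewrite shift_neg by apply phiF_cont. rewrite <- Hnorm. apply RInt_sub_ge; try lra.
      apply phiF_cont. intros; apply phiF_nonneg; nra.
Qed.

Lemma PF_big t : 5 * a <= t <= 1/2 -> 7/8 <= PF f cn (n^2) t.
Proof.
  intros Ht. assert (0 < a) by (eapply a_pos; eauto). assert (a <= 1/10) by (eapply a_small; eauto).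
  assert (Htail : RInt (phiF cn (n^2)) (4*a) 2 <= 1/24) by (eapply tail_small; eauto).
  assert (Hcen : 1 - 2/24 <= RInt (phiF cn (n^2)) (-(4*a)) (4*a)) by (eapply center_big; eauto).
  rewrite PF_rep.
  apply Rle_trans with (RInt (fun x => f x * (phiF cn (n^2) (t - x) - phiF cn (n^2) (t + x))) (t - 4*a) (t + 4*a)).
  2:{ apply RInt_sub_ge; try lra. apply kcont. intros x Hx.
      destruct (k_facts t x ltac:(lra) Hx). destruct (Hf01 x). lra. apply Rmult_le_pos; lra. }
  rewrite (RInt_ext _ (fun x => phiF cn (n^2) (t - x) - phiF cn (n^2) (t + x))).
  2:{ intros x Hx. rewrite Rmin_left, Rmax_right in Hx by lra. rewrite Hf1 by lra. reqR. ring. }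
  rewrite RInt_minusR.
  2: intro x; apply (continuity_pt_comp (fun x => t - x)); [reg|apply phiF_cont].
  2: intro x; apply (continuity_pt_comp (fun x => t + x)); [reg|apply phiF_cont].
  rewrite shift_neg, shift_pos by apply phiF_cont.
  replace (t - (t + 4 * a)) with (- (4 * a)) by ring. replace (t - (t - 4 * a)) with (4 * a) by ring.
  assert (RInt (phiF cn (n ^ 2)) (t + (t - 4 * a)) (t + (t + 4 * a)) <= RInt (phiF cn (n ^ 2)) (4*a) 2).
  { apply RInt_sub_ge; try lra. apply phiF_cont. intros; apply phiF_nonneg; nra. }
  lra.
Qed.

End PFsec.

Lemma deriv_param (f K dK : R -> R) t : contR f -> (forall y, is_derive K y (dK y)) -> contR dK ->
  is_derive (fun t => RInt (fun x => f x * K (t - x)) (-1) 1) t (RInt (fun x => f x * dK (t - x)) (-1) 1).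
Proof.
  intros Hf HK HdK.
  assert (HD0 : forall u v, is_derive (fun z => f v * K (z - v)) u (f v * dK (u - v))).
  { intros u v. eapply is_derive_eqv. apply is_derive_scal.
    apply (is_derive_comp K (fun z => z - v)). apply HK.
    eapply is_derive_eqv. apply (is_derive_minus (fun z => z) (fun _ => v)). apply is_derive_id. apply is_derive_const.
    reflexivity. unfold scal, minus, plus, opp, one, zero; simpl; unfold mult; simpl. ring. }
  assert (HD : forall u v, Derive (fun z => f v * K (z - v)) u = f v * dK (u - v)).
  { intros; apply is_derive_unique; apply HD0. }
  assert (HKc : contR K).
  { intro y. apply continuity_pt_filterlim. apply (@ex_derive_continuous R_AbsRing R_NormedModule). eexists; apply HK. }
  eapply is_derive_eqv. apply (is_derive_RInt_param (fun u x => f x * K (u - x)) (-1) 1 t).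
  - apply filter_forall. intros x0 s _. eexists. apply HD0.
  - intros s _. apply continuity_2d_pt_ext with (fun u v => f v * dK (u - v)).
    intros; symmetry; apply HD.
    apply continuity_2d_pt_mult.
    + apply (continuity_1d_2d_pt_comp f (fun u v => v)). apply Hf. apply continuity_2d_pt_id2.
    + apply (continuity_1d_2d_pt_comp dK (fun u v => u - v)). apply HdK.
      apply continuity_2d_pt_minus. apply continuity_2d_pt_id1. apply continuity_2d_pt_id2.
  - apply filter_forall. intros y. apply exRI. apply contR_mult; auto.
    intro x; apply (continuity_pt_comp (fun x => y - x)); [reg|apply HKc].
  - apply RInt_ext. intros; apply HD.
Qed.

Definition dphiF (cn : R) (m : nat) (y : R) := cn * (INR m * (-y/2) * (1 - y^2/4)^(pred m)).
Definition ddphiF (cn : R) (m : nat) (y : R) :=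
  cn * INR m * ((-1/2) * (1 - y^2/4)^(pred m) + (-y/2) * (INR (pred m) * (-y/2) * (1 - y^2/4)^(pred (pred m)))).

Lemma base_derive y : is_derive (fun y => 1 - y^2/4) y (-y/2).
Proof. auto_derive. auto. reqR. field. Qed.

Lemma phiF_derive cn m y : is_derive (phiF cn m) y (dphiF cn m y).
Proof. unfold phiF, dphiF. apply is_derive_scal. apply (is_derive_pow (fun y => 1 - y^2/4)). apply base_derive. Qed.

Lemma dphiF_derive cn m y : is_derive (dphiF cn m) y (ddphiF cn m y).
Proof.
  unfold ddphiF, dphiF.
  assert (H1 : is_derive (fun y => INR m * (-y/2)) y (INR m * (-1/2))).
  { auto_derive. auto. reqR. field. }
  assert (H2 := is_derive_pow (fun y => 1 - y^2/4) (pred m) y _ (base_derive y)).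
  assert (H3 := is_derive_mult _ _ y _ _ H1 H2 ltac:(intros; apply Rmult_comm)).
  eapply is_derive_eqv. apply is_derive_scal. apply H3.
  unfold plus, mult; simpl. reqR. field.
Qed.
Lemma dphiF_cont cn m : contR (dphiF cn m). Proof. intro; unfold dphiF; reg. Qed.
Lemma ddphiF_cont cn m : contR (ddphiF cn m). Proof. intro; unfold ddphiF; reg. Qed.

Definition uF (y : R) := y^2/4 - 1.
Definition H1F (cn : R) (m : nat) (y : R) := cn * INR m * (y/2) * (uF y)^(pred m).
Definition H2F (cn : R) (m : nat) (y : R) :=
  cn * INR m * ((1/2) * uF y ^ (pred m) + INR (pred m) * (y^2/4) * uF y ^ (pred (pred m))).

Lemma base_neg y k : (1 - y^2/4)^k = (-1)^k * (uF y)^k.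
Proof. rewrite <- Rpow_mult_distr. replace (-1 * uF y) with (1 - y^2/4) by (unfold uF; ring). reflexivity. Qed.

Lemma dphi_sign cn m y : (1 <= m)%nat -> dphiF cn m y = (-1)^m * H1F cn m y.
Proof.
  intros Hm. destruct m as [|k]; [lia|]. unfold dphiF, H1F. simpl pred. rewrite base_neg.
  replace ((-1)^(S k)) with (-1 * (-1)^k) by (simpl; ring). field.
Qed.

Lemma ddphi_sign cn m y : (2 <= m)%nat -> ddphiF cn m y = (-1)^m * H2F cn m y.
Proof.
  intros Hm. destruct m as [|[|k]]; [lia|lia|]. unfold ddphiF, H2F. simpl pred. rewrite !base_neg.
  replace ((-1)^(S (S k))) with ((-1)^k) by (simpl; ring).
  replace ((-1)^(S k)) with (-1 * (-1)^k) by (simpl; ring). field.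
Qed.

Lemma pow_le1 x k : 0 <= x <= 1 -> x^k <= 1.
Proof. intros; rewrite <- (pow1 k). apply pow_incr; lra. Qed.
Lemma pow_ge1 x k : 1 <= x -> 1 <= x^k.
Proof. intros; rewrite <- (pow1 k). apply pow_incr; lra. Qed.

Lemma uF_mono y1 y2 : 2 <= y1 <= y2 -> 0 <= uF y1 <= uF y2.
Proof. intros; unfold uF; split; nra. Qed.

Lemma H1_mono cn m y1 y2 : 0 <= cn -> 2 <= y1 <= y2 -> 0 <= H1F cn m y1 <= H1F cn m y2.
Proof.
  intros Hc Hy. destruct (uF_mono y1 y2 Hy). pose proof (pos_INR m).
  assert (0 <= uF y1 ^ pred m <= uF y2 ^ pred m) by (split; [apply pow_le|apply pow_incr]; lra).
  unfold H1F. assert (0 <= cn * INR m) by (apply Rmult_le_pos; lra).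
  split. apply Rmult_le_pos. apply Rmult_le_pos; lra. lra.
  apply Rmult_le_compat; try lra. apply Rmult_le_pos; lra. apply Rmult_le_compat_l; lra.
Qed.

Lemma H2_mono cn m y1 y2 : 0 <= cn -> 2 <= y1 <= y2 -> 0 <= H2F cn m y1 <= H2F cn m y2.
Proof.
  intros Hc Hy. destruct (uF_mono y1 y2 Hy). pose proof (pos_INR m). pose proof (pos_INR (pred m)).
  assert (0 <= uF y1 ^ pred m <= uF y2 ^ pred m) by (split; [apply pow_le|apply pow_incr]; lra).
  assert (0 <= uF y1 ^ pred (pred m) <= uF y2 ^ pred (pred m)) by (split; [apply pow_le|apply pow_incr]; lra).
  assert (0 <= y1^2/4 <= y2^2/4) by (split; nra).
  assert (0 <= INR (pred m) * (y1^2/4) <= INR (pred m) * (y2^2/4)) by (split; [apply Rmult_le_pos|apply Rmult_le_compat_l]; lra).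
  assert (0 <= INR (pred m) * (y1^2/4) * uF y1 ^ pred (pred m) <= INR (pred m) * (y2^2/4) * uF y2 ^ pred (pred m)).
  { split. apply Rmult_le_pos; lra. apply Rmult_le_compat; lra. }
  unfold H2F. assert (0 <= cn * INR m) by (apply Rmult_le_pos; lra).
  split. apply Rmult_le_pos; lra. apply Rmult_le_compat_l; lra.
Qed.

Lemma sig2 m : (-1)^m * (-1)^m = 1.
Proof. rewrite <- Rpow_mult_distr. replace (-1 * -1) with 1 by ring. apply pow1. Qed.

Section Tail.
Variables (f : R -> R) (cn a : R) (n : nat).
Hypothesis Hn : (10 <= n)%nat.
Hypothesis Hcn : 0 < cn.
Hypothesis Ha : a = 1 / INR n.
Hypothesis Hfc : contR f.
Hypothesis Hodd : forall t, f (-t) = - f t.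
Hypothesis Hf01 : forall t, 0 <= t -> 0 <= f t <= 1.
Hypothesis Hf1 : forall t, a <= t <= 1 - a -> f t = 1.

Definition PdF t := RInt (fun x => f x * dphiF cn (n^2) (t - x)) (-1) 1.
Definition PddF t := RInt (fun x => f x * ddphiF cn (n^2) (t - x)) (-1) 1.

Lemma m2 : (2 <= n^2)%nat. Proof. simpl. nia. Qed.

Lemma Qd_rep t : - (-1)^(n^2) * PdF t =
  RInt (fun x => f x * (H1F cn (n^2) (t + x) - H1F cn (n^2) (t - x))) 0 1.
Proof.
  unfold PdF. rewrite Rep; auto. 2: apply dphiF_cont.
  rewrite <- RInt_scalR.
  2:{ apply exRI. apply contR_mult; auto. apply contR_minus.
      + intro x; apply (continuity_pt_comp (fun x => t - x)); [reg|apply dphiF_cont].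
      + intro x; apply (continuity_pt_comp (fun x => t + x)); [reg|apply dphiF_cont]. }
  apply RInt_ext. intros x _. rewrite !dphi_sign by (pose proof m2; lia).
  pose proof (sig2 (n^2)). reqR. 
  transitivity (f x * (H1F cn (n ^ 2) (t + x) - H1F cn (n ^ 2) (t - x)) * ((-1) ^ (n ^ 2) * (-1) ^ (n ^ 2))).
  ring. rewrite H. ring.
Qed.

Lemma Qdd_rep t : - (-1)^(n^2) * PddF t =
  RInt (fun x => f x * (H2F cn (n^2) (t + x) - H2F cn (n^2) (t - x))) 0 1.
Proof.
  unfold PddF. rewrite Rep; auto. 2: apply ddphiF_cont.
  rewrite <- RInt_scalR.
  2:{ apply exRI. apply contR_mult; auto. apply contR_minus.
      + intro x; apply (continuity_pt_comp (fun x => t - x)); [reg|apply ddphiF_cont].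
      + intro x; apply (continuity_pt_comp (fun x => t + x)); [reg|apply ddphiF_cont]. }
  apply RInt_ext. intros x _. rewrite !ddphi_sign by (apply m2).
  pose proof (sig2 (n^2)). reqR. 
  transitivity (f x * (H2F cn (n ^ 2) (t + x) - H2F cn (n ^ 2) (t - x)) * ((-1) ^ (n ^ 2) * (-1) ^ (n ^ 2))).
  ring. rewrite H. ring.
Qed.

Lemma H1c : contR (H1F cn (n^2)). Proof. intro; unfold H1F, uF; reg. Qed.
Lemma H2c : contR (H2F cn (n^2)). Proof. intro; unfold H2F, uF; reg. Qed.

Lemma Qdd_nonneg t : 3 <= t -> 0 <= - (-1)^(n^2) * PddF t.
Proof.
  intros Ht. rewrite Qdd_rep. apply RInt_ge0.
  - apply contR_mult; auto. apply contR_minus.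
    + intro x; apply (continuity_pt_comp (fun x => t + x)); [reg|apply H2c].
    + intro x; apply (continuity_pt_comp (fun x => t - x)); [reg|apply H2c].
  - lra.
  - intros x Hx. destruct (Hf01 x) as [h1 h2]; [lra|].
    destruct (H2_mono cn (n^2) (t - x) (t + x)); try lra. apply Rmult_le_pos; lra.
Qed.

Lemma Qd3 : cn / 8 <= - (-1)^(n^2) * PdF 3.
Proof.
  assert (0 < a) by (eapply a_pos; eauto). assert (a <= 1/10) by (eapply a_small; eauto).
  rewrite Qd_rep.
  assert (Hc : contR (fun x => f x * (H1F cn (n^2) (3 + x) - H1F cn (n^2) (3 - x)))).
  { apply contR_mult; auto. apply contR_minus.
    + intro x; apply (continuity_pt_comp (fun x => 3 + x)); [reg|apply H1c].
    + intro x; apply (continuity_pt_comp (fun x => 3 - x)); [reg|apply H1c]. }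
  apply Rle_trans with (RInt (fun x => f x * (H1F cn (n^2) (3 + x) - H1F cn (n^2) (3 - x))) (1/2) (3/4)).
  2:{ apply RInt_sub_ge; auto; try lra. intros x Hx. destruct (Hf01 x) as [h1 h2]; [lra|].
      destruct (H1_mono cn (n^2) (3 - x) (3 + x)); try lra. apply Rmult_le_pos; lra. }
  replace (cn / 8) with (cn / 2 * (3/4 - 1/2)) by field.
  apply RInt_lb; auto. lra.
  intros x Hx. rewrite Hf1 by lra. rewrite Rmult_1_l.
  destruct (H1_mono cn (n^2) (7/2) (3 + x)); try lra.
  destruct (H1_mono cn (n^2) (3 - x) (5/2)); try lra.
  assert (cn / 2 <= H1F cn (n ^ 2) (7/2) - H1F cn (n ^ 2) (5/2)).
  { unfold H1F. pose proof m2 as Hm. apply le_INR in Hm. replace (INR 2) with 2 in Hm by (simpl; ring).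
    assert (1 <= uF (7/2) ^ pred (n^2)) by (apply pow_ge1; unfold uF; lra).
    assert (uF (5/2) ^ pred (n^2) <= 1) by (apply pow_le1; unfold uF; lra).
    assert (0 <= uF (5/2) ^ pred (n^2)) by (apply pow_le; unfold uF; lra).
    assert (0 <= cn * INR (n^2)) by nra.
    assert (cn * INR (n ^ 2) * (7/2/2) * 1 <= cn * INR (n ^ 2) * (7/2/2) * uF (7/2) ^ pred (n ^ 2)) by (apply Rmult_le_compat_l; nra).
    assert (cn * INR (n ^ 2) * (5/2/2) * uF (5/2) ^ pred (n ^ 2) <= cn * INR (n ^ 2) * (5/2/2) * 1) by (apply Rmult_le_compat_l; nra).
    nra. }
  lra.
Qed.

End Tail.

Lemma exRI_loc (h : R -> R) p q : p <= q -> (forall x, p <= x <= q -> continuity_pt h x) -> ex_RInt h p q.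
Proof.
  intros Hpq H. apply (@ex_RInt_continuous R_CompleteNormedModule). intros z Hz.
  rewrite Rmin_left, Rmax_right in Hz by lra. apply cont_pt, H; auto.
Qed.

Lemma deriv_cont (Q Qd : R -> R) : (forall t, is_derive Q t (Qd t)) -> contR Q.
Proof.
  intros H t. apply continuity_pt_filterlim. apply (@ex_derive_continuous R_AbsRing R_NormedModule).
  eexists; apply H.
Qed.

Lemma RInt_deriv (F Fd : R -> R) p q : p <= q -> (forall t, p <= t <= q -> is_derive F t (Fd t)) ->
  (forall t, p <= t <= q -> continuity_pt Fd t) -> RInt Fd p q = F q - F p.
Proof.
  intros Hpq HF HFd. apply is_RInt_unique.
  replace (F q - F p) with (minus (F q) (F p)) by reflexivity.
  apply (is_RInt_derive (V:=R_CompleteNormedModule)).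

  - intros x Hx; rewrite Rmin_left, Rmax_right in Hx by lra; auto.
  - intros x Hx; rewrite Rmin_left, Rmax_right in Hx by lra; apply cont_pt; auto.
Qed.

Section TailAbs.
Variables (Q Qd Qdd : R -> R) (lam : R).
Hypothesis Hlam : 0 < lam.
Hypothesis HQ : forall t, is_derive Q t (Qd t).
Hypothesis HQd : forall t, is_derive Qd t (Qdd t).
Hypothesis HQddc : contR Qdd.
Hypothesis HQdd : forall t, 3 <= t -> 0 <= Qdd t.
Hypothesis HQd3 : lam <= Qd 3.

Lemma Qc : contR Q. Proof. apply (deriv_cont Q Qd HQ). Qed.
Lemma Qdc : contR Qd. Proof. apply (deriv_cont Qd Qdd HQd). Qed.

Lemma Qd_ge t : 3 <= t -> lam <= Qd t.
Proof.
  intros Ht. assert (E := RInt_deriv Qd Qdd 3 t Ht (fun s _ => HQd s) (fun s _ => HQddc s)).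
  assert (0 <= RInt Qdd 3 t) by (apply RInt_ge0; auto; intros; apply HQdd; lra). lra.
Qed.

Definition Gf t := / (t * Qd t).
Definition Gd t := - (Qd t + t * Qdd t) / (t * Qd t)^2.
Definition Ff t := - cos (Q t) * Gf t.
Definition Fd t := sin (Q t) / t - cos (Q t) * Gd t.

Lemma tQd_pos t : 3 <= t -> 0 < t * Qd t.
Proof. intros; pose proof (Qd_ge t H). apply Rmult_lt_0_compat; lra. Qed.

Lemma Gf_derive t : 3 <= t -> is_derive Gf t (Gd t).
Proof.
  intros Ht. pose proof (tQd_pos t Ht). unfold Gf, Gd.
  eapply is_derive_eqv. apply (is_derive_inv (fun t => t * Qd t)).
  apply (is_derive_mult (fun t => t) Qd). apply is_derive_id. apply HQd. intros; apply Rmult_comm.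
  lra. unfold plus, mult, one; simpl. reqR. field. pose proof (Qd_ge t Ht); split; lra.
Qed.

Lemma Gd_cont t : 3 <= t -> continuity_pt Gd t.
Proof.
  intros Ht. pose proof (tQd_pos t Ht). unfold Gd.
  apply (continuity_pt_div (fun t => - (Qd t + t * Qdd t)) (fun t => (t * Qd t)^2)).
  - apply continuity_pt_opp, continuity_pt_plus. apply Qdc. apply continuity_pt_mult. apply continuity_pt_id. apply HQddc.
  - apply (continuity_pt_comp (fun t => t * Qd t) (fun y => y^2)). apply continuity_pt_mult. apply continuity_pt_id. apply Qdc. reg.
  - apply pow_nonzero; lra.
Qed.

Lemma Ff_derive t : 3 <= t -> is_derive Ff t (Fd t).
Proof.
  intros Ht. pose proof (tQd_pos t Ht). unfold Ff, Fd.
  eapply is_derive_eqv. apply (is_derive_mult (fun t => - cos (Q t)) Gf).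
  - apply (is_derive_opp (fun t => cos (Q t))). apply (is_derive_comp cos Q). apply is_derive_cos. apply HQ.
  - apply Gf_derive; auto.
  - intros; apply Rmult_comm.
  - unfold Gf, plus, mult, opp, scal; simpl. unfold mult; simpl. reqR. field. pose proof (Qd_ge t Ht); split; lra.
Qed.

Lemma sinQt_cont t : 0 < t -> continuity_pt (fun t => sin (Q t) / t) t.
Proof.
  intros Ht. apply (continuity_pt_div (fun t => sin (Q t)) (fun t => t)).
  apply (continuity_pt_comp Q sin). apply Qc. apply continuity_sin. apply continuity_pt_id. lra.
Qed.

Lemma cosGd_cont t : 3 <= t -> continuity_pt (fun t => cos (Q t) * Gd t) t.
Proof.
  intros Ht. apply continuity_pt_mult. apply (continuity_pt_comp Q cos). apply Qc. apply continuity_cos.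
  apply Gd_cont; auto.
Qed.

Lemma Fd_cont t : 3 <= t -> continuity_pt Fd t.
Proof.
  intros Ht. unfold Fd. apply continuity_pt_minus. apply sinQt_cont; lra. apply cosGd_cont; auto.
Qed.

Lemma Gd_neg t : 3 <= t -> Gd t <= 0.
Proof.
  intros Ht. pose proof (tQd_pos t Ht). pose proof (Qd_ge t Ht). pose proof (HQdd t Ht). unfold Gd.
  unfold Rdiv. apply Rmult_le_0_r. assert (0 <= t * Qdd t) by (apply Rmult_le_pos; lra). lra.
  left. apply Rinv_0_lt_compat. apply pow_lt; lra.
Qed.

Lemma tail_bound p q : 3 <= p -> p <= q -> Rabs (RInt (fun t => sin (Q t) / t) p q) <= 2 / (p * lam).
Proof.
  intros Hp Hpq.
  assert (E1 : RInt Fd p q = Ff q - Ff p) by (apply RInt_deriv; auto; intros; [apply Ff_derive|apply Fd_cont]; lra).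
  assert (E2 : RInt Gd p q = Gf q - Gf p) by (apply RInt_deriv; auto; intros; [apply Gf_derive|apply Gd_cont]; lra).
  assert (E3 : RInt (fun t => sin (Q t) / t) p q = RInt Fd p q + RInt (fun t => cos (Q t) * Gd t) p q).
  { rewrite <- (RInt_plus Fd (fun t => cos (Q t) * Gd t)).
    - apply RInt_ext. intros x Hx. rewrite Rmin_left, Rmax_right in Hx by lra. unfold Fd, plus; simpl. reqR. ring.
    - apply exRI_loc; auto. intros; apply Fd_cont; lra.
    - apply exRI_loc; auto. intros; apply cosGd_cont; lra. }
  assert (E4 : Rabs (RInt (fun t => cos (Q t) * Gd t) p q) <= Gf p - Gf q).
  { eapply Rle_trans. apply abs_RInt_le; auto. apply exRI_loc; auto. intros; apply cosGd_cont; lra.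
    apply Rle_trans with (RInt (fun t => - Gd t) p q).
    - apply RInt_le; auto.
      + apply exRI_loc; auto. intros. apply continuity_pt_comp with (f1 := fun t => cos (Q t) * Gd t).
        apply cosGd_cont; lra. apply Rcontinuity_abs.
      + apply exRI_loc; auto. intros; apply continuity_pt_opp, Gd_cont; lra.
      + intros x Hx. rewrite Rabs_mult. pose proof (Gd_neg x ltac:(lra)).
        rewrite (Rabs_left1 (Gd x)) by lra. pose proof (COS_bound (Q x)).
        assert (Rabs (cos (Q x)) <= 1) by (apply Rabs_le; lra).
        assert (0 <= - Gd x) by lra. nra.
    - rewrite (RInt_opp Gd). unfold opp; simpl. lra. apply exRI_loc; auto. intros; apply Gd_cont; lra. }
  assert (G1 : forall t, 3 <= t -> Rabs (Ff t) <= Gf t).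
  { intros t Ht. unfold Ff. rewrite Rabs_mult, Rabs_Ropp. pose proof (tQd_pos t Ht).
    assert (0 < Gf t) by (unfold Gf; apply Rinv_0_lt_compat; lra).
    rewrite (Rabs_right (Gf t)) by lra. pose proof (COS_bound (Q t)).
    assert (Rabs (cos (Q t)) <= 1) by (apply Rabs_le; lra). pose proof (Rabs_pos (cos (Q t))). nra. }
  assert (Gp : Gf p <= 1 / (p * lam)).
  { unfold Gf. pose proof (Qd_ge p Hp). unfold Rdiv. rewrite Rmult_1_l. apply Rinv_le_contravar.
    apply Rmult_lt_0_compat; lra. apply Rmult_le_compat_l; lra. }
  pose proof (G1 p Hp). pose proof (G1 q ltac:(lra)).
  rewrite E3, E1.
  eapply Rle_trans. apply Rabs_triang.
  assert (Rabs (Ff q - Ff p) <= Rabs (Ff q) + Rabs (Ff p)).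
  { unfold Rminus. eapply Rle_trans. apply Rabs_triang. rewrite Rabs_Ropp. lra. }
  assert (0 <= Gf q) by (unfold Gf; left; apply Rinv_0_lt_compat, tQd_pos; lra).
  unfold Rdiv in *. lra.
Qed.

End TailAbs.

Lemma rw1 (A B : R) : A + B - A = B. Proof. ring. Qed.
Lemma rw2 (A B : R) : B - (A + B) = - A. Proof. ring. Qed.

Lemma ball_R (x y eps : R) : Rabs (y - x) < eps -> ball x eps y.
Proof. intros H. exact H. Qed.

Lemma lim_infty (g : R -> R) c c0 K : 0 < c0 -> c <= c0 ->
  (forall p q, c <= p -> p <= q -> ex_RInt g p q) ->
  (forall p q, c0 <= p -> p <= q -> Rabs (RInt g p q) <= K / p) ->
  exists L, filterlim (fun R => RInt g c R) (Rbar_locally p_infty) (locally L).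
Proof.
  intros Hc Hcc Hex Hb.
  apply (@filterlim_locally_closely R R_CompleteSpace (Rbar_locally p_infty) (Rbar_locally_filter _)).
  apply (@filterlim_closely R R_UniformSpace (Rbar_locally p_infty) _).
  intros eps. set (M := c0 + Rabs K / eps + 1).
  assert (HM : 0 <= Rabs K / eps) by (apply Rdiv_le_0_compat; [apply Rabs_pos | apply cond_pos]).
  exists (fun R => M < R). split.
  - exists M. auto.
  - intros u v Hu Hv. apply ball_R.
    assert (Hkey : forall u v, M < u -> u <= v -> Rabs (RInt g c v - RInt g c u) < eps).
    { clear u v Hu Hv. intros u v Hu Huv.
      rewrite <- (RInt_Chasles g c u v) by (apply Hex; unfold M in *; lra).
      unfold plus; simpl. rewrite rw1.
      eapply Rle_lt_trans. apply Hb; unfold M in *; lra.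
      assert (Hu0 : 0 < u) by (unfold M in *; lra).
      apply Rle_lt_trans with (Rabs K / u).
      { unfold Rdiv. apply Rmult_le_compat_r. left; apply Rinv_0_lt_compat; lra. apply Rle_abs. }
      apply (Rmult_lt_reg_r u); auto. unfold Rdiv. rewrite Rmult_assoc, Rinv_l, Rmult_1_r by lra.
      assert (Rabs K < eps * u).
      { assert (Rabs K / eps < u) by (unfold M in *; lra).
        apply (Rmult_lt_compat_l eps) in H; [|apply cond_pos].
        unfold Rdiv in H. rewrite <- Rmult_assoc, (Rmult_comm eps), Rmult_assoc, Rinv_r, Rmult_1_r in H.
        exact H. apply Rgt_not_eq, cond_pos. }
      lra. }
    destruct (Rle_lt_dec u v). apply Hkey; auto.
    rewrite <- Rabs_Ropp. replace (- (RInt g c v - RInt g c u)) with (RInt g c u - RInt g c v) by ring.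
    apply Hkey; auto; lra.
Qed.

Lemma lim_0 (g : R -> R) K : 0 < K ->
  (forall p q, 0 < p -> p <= q -> q <= 1 -> ex_RInt g p q) ->
  (forall x, 0 < x <= 1 -> Rabs (g x) <= K) ->
  exists L, filterlim (fun e => RInt g e 1) (at_right 0) (locally L).
Proof.
  intros HK Hex Hb.
  apply (@filterlim_locally_closely R R_CompleteSpace (at_right 0) (at_right_proper_filter _) (fun e => RInt g e 1)).
  apply (proj2 (@filterlim_closely R R_UniformSpace (at_right 0) (@filter_filter R (at_right 0) (at_right_proper_filter 0)) (fun e => RInt g e 1))).
  intros eps. set (d := Rmin 1 (eps / (2 * K))).
  assert (Hd : 0 < d). { unfold d. apply Rmin_pos. lra. apply Rdiv_lt_0_compat. apply cond_pos. lra. }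
  assert (Hd1 : d <= 1) by apply Rmin_l.
  assert (Hd2 : K * d <= eps / 2).
  { unfold d. apply Rle_trans with (K * (eps / (2 * K))). apply Rmult_le_compat_l. lra. apply Rmin_r.
    right. field. lra. }
  exists (fun e => 0 < e < d). split.
  - exists (mkposreal d Hd). intros y Hy Hy0. split; auto. simpl in Hy.
    unfold ball in Hy; simpl in Hy; unfold AbsRing_ball, abs, minus, plus, opp in Hy; simpl in Hy.
    rewrite Ropp_0, Rplus_0_r in Hy. apply Rabs_lt_between in Hy. lra.
  - intros u v Hu Hv. apply ball_R.
    assert (Hkey : forall u v, 0 < u < d -> 0 < v < d -> u <= v -> Rabs (RInt g v 1 - RInt g u 1) < eps).
    { clear u v Hu Hv. intros u v Hu Hv Huv.
      rewrite <- (RInt_Chasles g u v 1) by (apply Hex; lra).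
      unfold plus; simpl. rewrite rw2.
      rewrite Rabs_Ropp.
      eapply Rle_lt_trans. apply abs_RInt_le; auto. apply Hex; lra.
      apply Rle_lt_trans with (K * (v - u)).
      - rewrite <- RInt_cst. apply RInt_le; auto.
        + apply ex_RInt_norm. apply Hex; lra.
        + apply ex_RInt_const.
        + intros x Hx. apply Hb. lra.
      - assert (0 < eps) by apply cond_pos. nra. }
    destruct (Rle_lt_dec u v). apply Hkey; auto.
    rewrite <- Rabs_Ropp. replace (- (RInt g v 1 - RInt g u 1)) with (RInt g u 1 - RInt g v 1) by ring.
    apply Hkey; auto; lra.
Qed.

Lemma RInt_neg_loc (g : R -> R) p q : ex_RInt g (-q) (-p) ->
  RInt g (-q) (-p) = RInt (fun x => g (-x)) p q.
Proof.
  intros Hex. assert (E := RInt_comp_lin g (-1) 0 p q).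
  pose proof (ex_RInt_comp_lin g (-1) 0 p q) as X.
  replace (-1 * p + 0) with (-p) in E, X by ring. replace (-1 * q + 0) with (-q) in E, X by ring.
  specialize (E (ex_RInt_swap _ _ _ Hex)). specialize (X (ex_RInt_swap _ _ _ Hex)).
  assert (X1 : ex_RInt (fun y => - g (-y)) p q).
  { apply ex_RInt_ext with (fun y => scal (-1) (g (-1 * y + 0))); auto.
    intros x _; unfold scal; simpl; unfold mult; simpl. replace (-1 * x + 0) with (-x) by ring. reqR. ring. }
  assert (E2 : RInt (fun y => - g (-y)) p q = RInt g (-p) (-q)).
  { rewrite <- E. apply RInt_ext; intros x _; unfold scal; simpl; unfold mult; simpl.
    replace (-1 * x + 0) with (-x) by ring. reqR. ring. }
  rewrite <- (opp_RInt_swap g (-p) (-q)) by (apply ex_RInt_swap; auto).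
  rewrite <- E2. rewrite <- (RInt_opp (fun y => - g (-y))) by auto.
  apply RInt_ext; intros; unfold opp; simpl; reqR; ring.
Qed.

Lemma filter_pos : filter_prod (at_right 0) (Rbar_locally p_infty) (fun p => 0 < fst p /\ 1 < snd p).
Proof.
  apply Filter_prod with (fun e => 0 < e) (fun R => 1 < R).
  - exists (mkposreal 1 Rlt_0_1). intros; auto.
  - exists 1. auto.
  - intros; simpl; auto.
Qed.

Lemma pv_combine (g : R -> R) A0 B0 :
  filterlim (fun e => RInt g e 1) (at_right 0) (locally A0) ->
  filterlim (fun R => RInt g 1 R) (Rbar_locally p_infty) (locally B0) ->
  (forall e R, 0 < e -> 1 < R -> trunc_int g e R = 2 * (RInt g e 1 + RInt g 1 R)) ->
  pv_integral g (2 * (A0 + B0)).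
Proof.
  intros HA HB Ht. unfold pv_integral.
  apply filterlim_ext_loc with (fun p => 2 * (RInt g (fst p) 1 + RInt g 1 (snd p))).
  { eapply filter_imp. 2: apply filter_pos. intros [e R] [H1 H2]. simpl in *. symmetry; apply Ht; auto. }
  apply (filterlim_comp_2 (G := locally A0) (H := locally B0) (fun p : R * R => RInt g (fst p) 1) (fun p : R * R => RInt g 1 (snd p)) (fun a b => 2 * (a + b))).
  - apply (filterlim_comp (R*R) R R fst (fun e => RInt g e 1) (filter_prod (at_right 0) (Rbar_locally p_infty)) (at_right 0) (locally A0)); [apply filterlim_fst | exact HA].
  - apply (filterlim_comp (R*R) R R snd (fun e => RInt g 1 e) (filter_prod (at_right 0) (Rbar_locally p_infty)) (Rbar_locally p_infty) (locally B0)); [apply filterlim_snd | exact HB].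
  - apply (filterlim_comp _ _ _ (fun x : R * R => plus (fst x) (snd x)) (fun y => 2 * y) _ (locally (plus A0 B0))).
    exact (@filterlim_plus R_AbsRing R_NormedModule A0 B0).
    apply (cont_pt (fun y => 2 * y)). reg.
Qed.

Definition contI (g : R -> R) p q := forall x, p <= x <= q -> continuity_pt g x.

Lemma contI_sub g p q p' q' : contI g p q -> p <= p' -> q' <= q -> contI g p' q'.
Proof. intros H ? ? x Hx; apply H; lra. Qed.

Lemma RInt_ge0_l (g : R -> R) p q : p <= q -> contI g p q -> (forall x, p <= x <= q -> 0 <= g x) -> 0 <= RInt g p q.
Proof. intros Hpq Hg H. apply RInt_ge_0; auto. apply exRI_loc; auto. intros; apply H; lra. Qed.

Lemma RInt_mono_l (g h : R -> R) p q : p <= q -> contI g p q -> contI h p q ->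
  (forall x, p <= x <= q -> g x <= h x) -> RInt g p q <= RInt h p q.
Proof. intros Hpq Hg Hh H. apply RInt_le; auto; try (apply exRI_loc; auto). intros; apply H; lra. Qed.

Lemma RInt_chasles_l (g : R -> R) p r q : p <= r -> r <= q -> contI g p q ->
  RInt g p q = RInt g p r + RInt g r q.
Proof.
  intros H1 H2 Hg. rewrite <- (RInt_Chasles g p r q). reflexivity.
  apply exRI_loc; auto; intros; apply Hg; lra.
  apply exRI_loc; auto; intros; apply Hg; lra.
Qed.

Lemma RInt_sub_ge_l (g : R -> R) p r s q : p <= r -> r <= s -> s <= q -> contI g p q ->
  (forall x, p <= x <= q -> 0 <= g x) -> RInt g r s <= RInt g p q.
Proof.
  intros H1 H2 H3 Hg H.
  rewrite (RInt_chasles_l g p r q) by (auto; lra).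
  rewrite (RInt_chasles_l g r s q) by (auto; try lra; eapply contI_sub; eauto; lra).
  assert (0 <= RInt g p r) by (apply RInt_ge0_l; auto; [eapply contI_sub; eauto; lra | intros; apply H; lra]).
  assert (0 <= RInt g s q) by (apply RInt_ge0_l; auto; [eapply contI_sub; eauto; lra | intros; apply H; lra]).
  lra.
Qed.

Lemma RInt_inv p q : 0 < p -> p <= q -> RInt (fun t => / t) p q = ln q - ln p.
Proof.
  intros Hp Hpq. apply RInt_deriv; auto.
  - intros t Ht. apply is_derive_ln; lra.
  - intros t Ht. apply continuity_pt_inv. apply continuity_pt_id. unfold id; lra.
Qed.

Lemma sin_mul_pow m x : sin ((-1)^m * x) = (-1)^m * sin x.
Proof.
  induction m. simpl. rewrite !Rmult_1_l. reflexivity.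
  replace ((-1)^(S m) * x) with (- ((-1)^m * x)) by (simpl; ring).
  rewrite sin_neg, IHm. simpl; ring.
Qed.

Section Main.
Variables (f : R -> R) (cn a : R) (n : nat).
Hypothesis Hn : (10 <= n)%nat.
Hypothesis Hcn : 0 < cn.
Hypothesis Hnorm : RInt (phiF cn (n^2)) (-2) 2 = 1.
Hypothesis Ha : a = 1 / INR n.
Hypothesis Hfc : contR f.
Hypothesis Hodd : forall t, f (-t) = - f t.
Hypothesis Hf01 : forall t, 0 <= t -> 0 <= f t <= 1.
Hypothesis Hf1 : forall t, a <= t <= 1 - a -> f t = 1.

Local Notation P := (PF f cn (n^2)).
Local Notation Pd := (PdF f cn n).
Local Notation Pdd := (PddF f cn n).

Lemma P_der t : is_derive P t (Pd t).
Proof. apply (deriv_param f (phiF cn (n^2)) (dphiF cn (n^2))); auto. apply phiF_derive. apply dphiF_cont. Qed.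
Lemma Pd_der t : is_derive Pd t (Pdd t).
Proof. apply (deriv_param f (dphiF cn (n^2)) (ddphiF cn (n^2))); auto. apply dphiF_derive. apply ddphiF_cont. Qed.

Lemma Pdd_cont : contR Pdd.
Proof.
  set (c0 := acoef f cn (n^2)). set (e0 := fun k : nat => k). set (D := (2 * n^2)%nat).
  assert (E0 : forall t, P t = spoly c0 e0 D t).
  { intros t. unfold PF, phiF, spoly. apply P_expand; auto. }
  set (c1 := fun k => c0 k * INR (e0 k)). set (e1 := fun k => pred (e0 k)).
  assert (E1 : forall t, Pd t = spoly c1 e1 D t).
  { intros t. assert (H1 := is_derive_ext _ _ t _ E0 (P_der t)).
    assert (H2 := spoly_derive c0 e0 D t).
    apply is_derive_unique in H1. apply is_derive_unique in H2. rewrite <- H1, H2. reflexivity. }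
  set (c2 := fun k => c1 k * INR (e1 k)). set (e2 := fun k => pred (e1 k)).
  assert (E2 : forall t, Pdd t = spoly c2 e2 D t).
  { intros t. assert (H1 := is_derive_ext _ _ t _ E1 (Pd_der t)).
    assert (H2 := spoly_derive c1 e1 D t).
    apply is_derive_unique in H1. apply is_derive_unique in H2. rewrite <- H1, H2. reflexivity. }
  intro t. apply continuity_pt_ext with (spoly c2 e2 D). intros; symmetry; apply E2.
  apply continuity_pt_filterlim. apply spoly_cont.
Qed.


Lemma Pc : contR P. Proof. apply (deriv_cont P Pd P_der). Qed.
Lemma Pdc : contR Pd. Proof. apply (deriv_cont Pd Pdd Pd_der). Qed.

Lemma P0 : P 0 = 0.
Proof. assert (H : P (-0) = - P 0) by (eapply PF_odd; eauto). rewrite Ropp_0 in H. lra. Qed.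

Lemma P01 t : 0 <= t <= 1 -> 0 <= P t <= 1.
Proof. intros; eapply PF_01; eauto. Qed.

Local Notation g := (fun t => sin (P t) / t).

Lemma g_cont x : 0 < x -> continuity_pt g x.
Proof.
  intros Hx. apply (continuity_pt_div (fun t => sin (P t)) (fun t => t)).
  apply (continuity_pt_comp P sin). apply Pc. apply continuity_sin. apply continuity_pt_id. lra.
Qed.

Lemma g_contI p q : 0 < p -> contI g p q.
Proof. intros Hp x Hx; apply g_cont; lra. Qed.

Lemma g_exI p q : 0 < p -> p <= q -> ex_RInt g p q.
Proof. intros; apply exRI_loc; auto. intros; apply g_cont; lra. Qed.

Lemma PI_facts : 1 < PI / 2 /\ PI / 6 <= 2/3.
Proof. pose proof PI2_1; pose proof PI_4. split; lra. Qed.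

Lemma g_nonneg x : 0 < x <= 1 -> 0 <= g x.
Proof.
  intros Hx. destruct (P01 x) as [h1 h2]; [lra|]. destruct PI_facts.
  unfold Rdiv. apply Rmult_le_pos. apply sin_ge_0; lra. left; apply Rinv_0_lt_compat; lra.
Qed.

Lemma P_lin : exists K, 0 < K /\ forall x, 0 <= x <= 1 -> P x <= K * x.
Proof.
  destruct (continuity_ab_maj (fun t => Rabs (Pd t)) 0 1) as [M [HM _]]. lra.
  { intros c _. apply (continuity_pt_comp Pd Rabs). apply Pdc. apply Rcontinuity_abs. }
  exists (Rabs (Pd M) + 1). split. pose proof (Rabs_pos (Pd M)); lra.
  intros x Hx.
  assert (E : RInt Pd 0 x = P x - P 0) by (apply RInt_deriv; [lra | intros; apply P_der | intros; apply Pdc]).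
  rewrite P0, Rminus_0_r in E. rewrite <- E. replace x with (x - 0) at 2 by ring.
  apply RInt_ub. apply Pdc. lra. intros y Hy. pose proof (HM y ltac:(lra)). simpl in H.
  pose proof (Rle_abs (Pd y)). lra.
Qed.

Lemma g_bound : exists K, 0 < K /\ forall x, 0 < x <= 1 -> Rabs (g x) <= K.
Proof.
  destruct P_lin as [K [HK HPK]]. exists K. split; auto. intros x Hx.
  rewrite Rabs_right by (apply Rle_ge, g_nonneg; auto).
  destruct (P01 x) as [h1 h2]; [lra|].
  assert (sin (P x) <= P x).
  { destruct h1 as [h1|h1]. left; apply sin_lt_x; auto. rewrite <- h1, sin_0. lra. }
  pose proof (HPK x ltac:(lra)).
  apply (Rmult_le_reg_r x). lra. unfold Rdiv. rewrite Rmult_assoc, Rinv_l, Rmult_1_r by lra. lra.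
Qed.

Lemma A_exists : exists A0, filterlim (fun e => RInt g e 1) (at_right 0) (locally A0).
Proof.
  destruct g_bound as [K [HK HgK]]. apply (lim_0 g K); auto.
  intros; apply g_exI; lra.
Qed.

Lemma sin_half t : 5 * a <= t <= 1/2 -> 1/2 <= sin (P t).
Proof.
  intros Ht. assert (0 < a) by (eapply a_pos; eauto). assert (7/8 <= P t) by (eapply PF_big; eauto).
  destruct (P01 t) as [h1 h2]; [lra|]. destruct PI_facts. rewrite <- sin_PI6.
  apply sin_incr_1; lra.
Qed.

Lemma A_ineq e : 0 < e < 5 * a -> 1/2 * (ln (1/2) - ln (5 * a)) <= RInt g e 1.
Proof.
  intros He. assert (0 < a) by (eapply a_pos; eauto). assert (a <= 1/10) by (eapply a_small; eauto).
  apply Rle_trans with (RInt g (5*a) (1/2)).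
  2:{ apply RInt_sub_ge_l; try lra. apply g_contI; lra. intros; apply g_nonneg; lra. }
  rewrite <- RInt_inv by lra. rewrite <- RInt_scalR.
  2:{ apply exRI_loc. lra. intros; apply continuity_pt_inv. apply continuity_pt_id. unfold id; lra. }
  apply RInt_mono_l. lra.
  - intros x Hx. apply continuity_pt_mult. apply continuity_pt_const; intros ? ?; reflexivity.
    apply continuity_pt_inv. apply continuity_pt_id. unfold id; lra.
  - apply g_contI; lra.
  - intros x Hx. pose proof (sin_half x Hx). unfold Rdiv. apply Rmult_le_compat_r.
    left; apply Rinv_0_lt_compat; lra. lra.
Qed.

Lemma A_lower A0 : filterlim (fun e => RInt g e 1) (at_right 0) (locally A0) ->
  1/2 * (ln (1/2) - ln (5 * a)) <= A0.
Proof.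
  intros HA. assert (0 < a) by (eapply a_pos; eauto).
  assert (Hle := filterlim_le (F := at_right 0) (fun _ => 1/2 * (ln (1/2) - ln (5 * a))) (fun e => RInt g e 1)
    (1/2 * (ln (1/2) - ln (5 * a))) A0).
  simpl in Hle. apply Hle.
  - exists (mkposreal (5*a) ltac:(lra)). intros y Hy Hy0. apply A_ineq. split; auto.
    unfold ball in Hy; simpl in Hy; unfold AbsRing_ball, abs, minus, plus, opp in Hy; simpl in Hy.
    rewrite Ropp_0, Rplus_0_r in Hy. apply Rabs_lt_between in Hy. lra.
  - apply filterlim_const.
  - exact HA.
Qed.


Lemma cn_lower : 1/4 <= cn.
Proof.
  assert (E : cn * RInt (psiF (n^2)) (-2) 2 = 1).
  { rewrite <- Hnorm. symmetry. apply (RInt_scalR (psiF (n^2))). apply exRI, psiF_cont. }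
  assert (RInt (psiF (n^2)) (-2) 2 <= 1 * (2 - -2)).
  { apply RInt_ub. apply psiF_cont. lra. intros x Hx. unfold psiF. apply pow_le1. nra. }
  nra.
Qed.

Local Notation sg := ((-1) ^ (S (n^2))).

Lemma tailP p q : 3 <= p -> p <= q -> Rabs (RInt g p q) <= 2 / (p * (cn / 8)).
Proof.
  intros Hp Hpq.
  assert (E : RInt (fun t => sin (sg * P t) / t) p q = sg * RInt g p q).
  { rewrite <- RInt_scalR by (apply g_exI; lra). apply RInt_ext. intros x _.
    rewrite sin_mul_pow. reqR. unfold Rdiv. ring. }
  assert (Hb : Rabs (RInt (fun t => sin (sg * P t) / t) p q) <= 2 / (p * (cn / 8))).
  { apply (tail_bound (fun t => sg * P t) (fun t => sg * Pd t) (fun t => sg * Pdd t) (cn/8)); auto.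
  - lra.
  - intros t. apply is_derive_scal. apply P_der.
  - intros t. apply is_derive_scal. apply Pd_der.
  - intro t. apply continuity_pt_mult. apply continuity_pt_const; intros ? ?; reflexivity. apply Pdd_cont.
  - intros t Ht. replace sg with (- (-1)^(n^2)) by (simpl; ring). eapply Qdd_nonneg; eauto.
  - replace sg with (- (-1)^(n^2)) by (simpl; ring). eapply Qd3; eauto. }
  rewrite E, Rabs_mult, pow_1_abs, Rmult_1_l in Hb. exact Hb.
Qed.

Lemma B_exists : exists B0, filterlim (fun R => RInt g 1 R) (Rbar_locally p_infty) (locally B0).
Proof.
  apply (lim_infty g 1 3 (16 / cn)). lra. lra.
  - intros; apply g_exI; lra.
  - intros p q Hp Hpq. replace (16 / cn / p) with (2 / (p * (cn / 8))) by (field; lra). apply tailP; auto.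
Qed.

Lemma B_ineq R : 3 < R -> - ln 3 - 2 / (3 * (cn / 8)) <= RInt g 1 R.
Proof.
  intros HR. rewrite (RInt_chasles_l g 1 3 R) by (try lra; apply g_contI; lra).
  assert (H1 : - ln 3 <= RInt g 1 3).
  { replace (- ln 3) with (- (ln 3 - ln 1)) by (rewrite ln_1; ring).
    rewrite <- RInt_inv by lra.
    rewrite <- (RInt_opp (fun t => / t)) by (apply exRI_loc; [lra| intros; apply continuity_pt_inv; [apply continuity_pt_id | unfold id; lra]]).
    apply RInt_mono_l. lra.
    - intros x Hx. apply continuity_pt_opp, continuity_pt_inv. apply continuity_pt_id. unfold id; lra.
    - apply g_contI; lra.
    - intros x Hx. pose proof (SIN_bound (P x)). unfold Rdiv.
      assert (0 < / x) by (apply Rinv_0_lt_compat; lra). change (opp (/ x)) with (- / x). assert (0 <= (sin (P x) + 1) * / x) by (apply Rmult_le_pos; lra). lra. }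
  assert (H2 : Rabs (RInt g 3 R) <= 2 / (3 * (cn / 8))) by (apply tailP; lra).
  apply Rabs_le_between in H2. lra.
Qed.


Lemma B_lower B0 : filterlim (fun R => RInt g 1 R) (Rbar_locally p_infty) (locally B0) ->
  - ln 3 - 2 / (3 * (cn / 8)) <= B0.
Proof.
  intros HB.
  assert (Hle := filterlim_le (F := Rbar_locally p_infty) (fun _ => - ln 3 - 2 / (3 * (cn / 8))) (fun R => RInt g 1 R)
    (- ln 3 - 2 / (3 * (cn / 8))) B0).
  simpl in Hle. apply Hle.
  - exists 3. intros; apply B_ineq; auto.
  - apply filterlim_const.
  - exact HB.
Qed.

Lemma gen_cont (h : R -> R) x : x <> 0 -> continuity_pt h x -> continuity_pt (fun t => h t / t) x.
Proof.
  intros Hx Hh. apply (continuity_pt_div h (fun t => t)); auto. apply continuity_pt_id.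
Qed.

Lemma ex_gen (h : R -> R) p q : contR h -> ((0 < p /\ 0 < q) \/ (p < 0 /\ q < 0)) -> ex_RInt (fun t => h t / t) p q.
Proof.
  intros Hh Hpq. destruct (Rle_lt_dec p q).
  - apply exRI_loc; auto. intros; apply gen_cont; auto. lra.
  - apply ex_RInt_swap. apply exRI_loc; [lra|]. intros; apply gen_cont; auto. lra.
Qed.

Lemma sinP_cont : contR (fun t => sin (P t)).
Proof. intro t. apply (continuity_pt_comp P sin). apply Pc. apply continuity_sin. Qed.
Lemma cosP_cont : contR (fun t => cos (P t)).
Proof. intro t. apply (continuity_pt_comp P cos). apply Pc. apply continuity_cos. Qed.

Lemma Podd t : P (-t) = - P t.
Proof. eapply PF_odd; eauto. Qed.

Lemma trunc_sin e R : 0 < e -> 1 < R -> trunc_int g e R = 2 * (RInt g e 1 + RInt g 1 R).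
Proof.
  intros He HR. unfold trunc_int.
  rewrite RInt_neg_loc by (apply (ex_gen (fun t => sin (P t))); [apply sinP_cont | right; lra]).
  rewrite (RInt_ext (fun x => sin (P (-x)) / (-x)) g).
  2:{ intros x Hx. rewrite Podd, sin_neg. unfold Rdiv. rewrite Rinv_opp. reqR. ring. }
  rewrite <- (RInt_Chasles g e 1 R).
  unfold plus; simpl. ring.
  apply (ex_gen (fun t => sin (P t))); [apply sinP_cont | left; lra].
  apply (ex_gen (fun t => sin (P t))); [apply sinP_cont | left; lra].
Qed.

Lemma pv_cos : pv_integral (fun t => cos (P t) / t) 0.
Proof.
  unfold pv_integral. apply filterlim_ext_loc with (fun _ => 0).
  2: apply filterlim_const.
  eapply filter_imp. 2: apply filter_pos. intros [e R] [He HR]. simpl in *. unfold trunc_int.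
  rewrite RInt_neg_loc by (apply (ex_gen (fun t => cos (P t))); [apply cosP_cont | right; lra]).
  rewrite (RInt_ext (fun x => cos (P (-x)) / (-x)) (fun x => - (cos (P x) / x))).
  2:{ intros x Hx. rewrite Podd, cos_neg. unfold Rdiv. rewrite Rinv_opp. reqR. ring. }
  rewrite (RInt_opp (fun x => cos (P x) / x)). unfold opp; simpl. ring.
  apply (ex_gen (fun t => cos (P t))); [apply cosP_cont | left; lra].
Qed.

End Main.

Lemma mu0 (f : R -> R) : contR f -> (forall t, f (-t) = - f t) -> mu f 0 = 0.
Proof.
  intros Hc Ho. unfold mu. rewrite RInt_sym.
  - rewrite (RInt_ext _ (fun _ => 0)). rewrite RInt_cst. ring.
    intros x _. rewrite Ho. simpl. reqR. ring.
  - intro x. apply continuity_pt_mult; auto. reg.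
Qed.

Lemma mu1 (f : R -> R) (a : R) : contR f -> (forall t, f (-t) = - f t) ->
  (forall t, 0 <= t -> 0 <= f t <= 1) -> (forall t, a <= t <= 1 - a -> f t = 1) -> a <= 1/10 ->
  mu f 1 <> 0.
Proof.
  intros Hc Ho H01 H1 Ha. unfold mu. rewrite RInt_sym.
  2:{ intro x. apply continuity_pt_mult; auto. reg. }
  rewrite (RInt_ext _ (fun x => - (2 * x * f x))).
  2:{ intros x _. rewrite Ho. simpl. reqR. ring. }
  assert (Hk : contR (fun x => 2 * x * f x)) by (intro; apply continuity_pt_mult; auto; reg).
  rewrite RInt_oppR by auto.
  assert (1 * (3/4 - 1/2) <= RInt (fun x => 2 * x * f x) (1/2) (3/4)).
  { apply RInt_lb; auto. lra. intros x Hx. rewrite H1 by lra. lra. }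
  assert (RInt (fun x => 2 * x * f x) (1/2) (3/4) <= RInt (fun x => 2 * x * f x) 0 1).
  { apply RInt_sub_ge; auto; try lra. intros x Hx. destruct (H01 x); [lra|]. nra. }
  lra.
Qed.

Lemma ln_le_x x : 0 < x -> ln x <= x - 1.
Proof. intros Hx. pose proof (exp_ineq1_le (ln x)). rewrite exp_ln in H by auto. lra. Qed.

Lemma three_pow_10 : (10 <= 3^100)%nat.
Proof. apply Nat.le_trans with (3^3)%nat. simpl; lia. apply Nat.pow_le_mono_r; lia. Qed.

Lemma ln_n_big (n : nat) : (3^100 <= n)%nat -> 100 <= ln (INR n).
Proof.
  intros Hn. apply le_INR in Hn. rewrite pow_INR in Hn.
  replace (INR 3) with 3 in Hn by (simpl; ring).
  assert (H3 : 0 < 3 ^ 100) by (apply pow_lt; lra).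
  assert (ln (3^100) <= ln (INR n)) by (apply ln_le; auto).
  rewrite ln_pow in H by lra.
  assert (1 <= ln 3).
  { assert (ln (exp 1) <= ln 3) by (apply ln_le; [apply exp_pos | apply exp_le_3]). rewrite ln_exp in H0. exact H0. }
  replace (INR 100) with 100 in H by (simpl; ring). nra.
Qed.

Theorem proposition2 :
  exists c : R, 0 < c /\
  exists N : nat, forall n : nat, (N <= n)%nat ->
  forall (f : R -> R) (cn : R),
    (forall t, continuity_pt f t) ->
    (forall t, 1 / INR n <= t <= 1 - 1 / INR n -> f t = 1) ->
    (forall t, -1 + 1 / INR n <= t <= - (1 / INR n) -> f t = -1) ->
    (forall t, 1 <= Rabs t -> f t = 0) ->
    affine_on f (-1) (-1 + 1 / INR n) ->
    affine_on f (- (1 / INR n)) (1 / INR n) ->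
    affine_on f (1 - 1 / INR n) 1 ->
    0 < cn ->
    RInt (fun x => cn * (1 - x ^ 2 / 4) ^ (n ^ 2)) (-2) 2 = 1 ->
    let phi := fun x => cn * (1 - x ^ 2 / 4) ^ (n ^ 2) in
    let P := fun t => RInt (fun x => f x * phi (t - x)) (-1) 1 in
    let d := (2 * n ^ 2 - 1)%nat in
    is_poly_of_degree P d /\
    exists Lre Lim : R,
      pv_integral (fun t => cos (P t) / t) Lre /\
      pv_integral (fun t => sin (P t) / t) Lim /\
      c * ln (INR d) <= Cmod (Lre, Lim).
Proof.
  exists (1/8). split; [lra|].
  exists (3^100)%nat. intros n Hn f cn Hfc H1 Hm1 H0 A1 A2 A3 Hcn Hnorm phi P d.
  assert (Hn10 : (10 <= n)%nat) by (eapply Nat.le_trans; [apply three_pow_10 | exact Hn]).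
  set (a := 1 / INR n) in *.
  assert (Ha : a = 1 / INR n) by reflexivity.
  assert (Hapos : 0 < a) by (eapply a_pos; eauto).
  assert (Ha10 : a <= 1/10) by (eapply a_small; eauto).
  destruct (f_facts f a Hapos ltac:(lra) H1 Hm1 H0 A1 A2 A3) as [Hodd Hf01].
  assert (Hnorm' : RInt (phiF cn (n^2)) (-2) 2 = 1) by exact Hnorm.
  assert (Hm1n : (1 <= n^2)%nat) by (simpl; nia).
  split.
  - change (is_poly_of_degree (fun t => RInt (fun x => f x * (cn * (1 - (t - x)^2/4)^(n^2))) (-1) 1) (2 * n^2 - 1)).
    apply P_degree; auto.
    apply mu0; auto.
    eapply mu1; eauto.
  - assert (HAe : exists A0, filterlim (fun e => RInt (fun t => sin (PF f cn (n^2) t) / t) e 1) (at_right 0) (locally A0)) by (eapply A_exists; eauto).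
    destruct HAe as [A0 HA].
    assert (HBe : exists B0, filterlim (fun R => RInt (fun t => sin (PF f cn (n^2) t) / t) 1 R) (Rbar_locally p_infty) (locally B0)) by (eapply B_exists; eauto).
    destruct HBe as [B0 HB].
    assert (HAl : 1/2 * (ln (1/2) - ln (5 * a)) <= A0) by (eapply (A_lower f cn a n); eauto).
    assert (HBl : - ln 3 - 2 / (3 * (cn / 8)) <= B0) by (eapply (B_lower f cn a n); eauto).
    assert (Hcn4 : 1/4 <= cn) by (eapply cn_lower; eauto).
    exists 0, (2 * (A0 + B0)). split; [|split].
    + change (pv_integral (fun t => cos (PF f cn (n^2) t) / t) 0). eapply pv_cos; eauto.
    + change (pv_integral (fun t => sin (PF f cn (n^2) t) / t) (2*(A0+B0))). apply pv_combine; auto.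
      intros; eapply trunc_sin; eauto.
    + assert (Hln : 100 <= ln (INR n)) by (apply ln_n_big; auto).
      assert (HnR : 0 < INR n) by (apply lt_0_INR; lia).
      assert (E5 : ln (5 * a) = ln 5 - ln (INR n)).
      { replace (5 * a) with (5 / INR n) by (rewrite Ha; field; lra). apply ln_div; lra. }
      assert (E2 : ln (1/2) = - ln 2).
      { rewrite ln_div by lra. rewrite ln_1. ring. }
      pose proof (ln_le_x 2 ltac:(lra)). pose proof (ln_le_x 3 ltac:(lra)). pose proof (ln_le_x 5 ltac:(lra)).
      assert (Hq : 2 / (3 * (cn / 8)) <= 64/3).
      { replace (2 / (3 * (cn / 8))) with (16 / (3 * cn)) by (field; lra).
        apply (Rmult_le_reg_r (3 * cn)). lra. unfold Rdiv. rewrite Rmult_assoc, Rinv_l by lra. nra. }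
      assert (HL : ln (INR n) - 52 <= 2 * (A0 + B0)) by lra.
      assert (Hd : ln (INR d) <= 1 + 2 * ln (INR n)).
      { unfold d. rewrite minus_INR by (simpl; nia). rewrite mult_INR, pow_INR.
        replace (INR 2) with 2 by (simpl; ring). replace (INR 1) with 1 by (simpl; ring).
        assert (1 <= INR n) by (replace 1 with (INR 1) by reflexivity; apply le_INR; lia).
        assert (0 < 2 * INR n ^ 2 - 1) by nra.
        apply Rle_trans with (ln (2 * INR n ^ 2)). apply ln_le; auto. lra.
        rewrite ln_mult by (try lra; apply pow_lt; lra). rewrite ln_pow by lra.
        replace (INR 2) with 2 by (simpl; ring). lra. }
      unfold Cmod. simpl fst. simpl snd. replace (0 ^ 2 + (2 * (A0 + B0)) ^ 2) with ((2 * (A0 + B0)) ^ 2) by ring.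
      rewrite sqrt_pow2 by lra. lra.
Qed.
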